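(* There is a constant $c$, independent of $n$, such that for all integers $n\ge2$ the operator norm of $\mathcal I_n^*: C(\overline\Omega_H)\to C(\overline\Omega_H)$ with respect to the uniform norm satisfies $$\|\mathcal I_n^*\|_\infty\le c(\log n)^3 .$$
   Context: Let $\mathbb R^4_H=\{\mathbf t\in\mathbb R^4: t_1+t_2+t_3+t_4=0\}$, $\mathbb Z^4_H=\mathbb Z^4\cap\mathbb R^4_H$, $\Omega_H=\{\mathbf t\in\mathbb R^4_H: -1<t_i-t_j\le1,\ 1\le i<j\le4\}$ with closure $\overline\Omega_H$. Let $\mathbb H=\{\mathbf k\in\mathbb Z^4_H: k_1\equiv k_2\equiv k_3\equiv k_4\pmod4\}$, $\phi_{\mathbf k}(\mathbf t)=e^{\frac{\pi i}{2}\mathbf k\cdot\mathbf t}$, $\mathbb H_n^*=\{\mathbf k\in\mathbb H: -4n\le k_i-k_j\le4n,\ 1\le i<j\le4\}$. For $\mathbf k\in\mathbb H_n^*$, $c^{(n)}_{\mathbf k}=1$ if $\max_ik_i-\min_ik_i<4n$, and otherwise $c^{(n)}_{\mathbf k}=1/\binom{p+q}{p}$ where $p$ (resp. $q$) is the number of coordinates equal to $\max_ik_i$ (resp. $\min_ik_i$). Let $\Phi_n^*(\mathbf t)=\frac1{4n^3}\sum_{\mathbf k\in\mathbb H_n^*}c^{(n)}_{\mathbf k}\phi_{\mathbf k}(\mathbf t)$ and, for $f\in C(\overline\Omega_H)$, $\mathcal I_n^*f(\mathbf t)=\sum_{\mathbf j\in\mathbb H_n^*}f(\tfrac{\mathbf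 j}{4n})\Phi_n^*(\mathbf t-\tfrac{\mathbf j}{4n})$. *)

(* Defs.v *)
From Stdlib Require Import Reals ZArith List Lia.
From Coquelicot Require Import Coquelicot.
Import ListNotations.
Open Scope R_scope.

Definition V4 : Type := (R * R * R * R)%type.
Definition Z4 : Type := (Z * Z * Z * Z)%type.

Definition t1 (t : V4) : R := let '(a, _, _, _) := t in a.
Definition t2 (t : V4) : R := let '(_, b, _, _) := t in b.
Definition t3 (t : V4) : R := let '(_, _, c, _) := t in c.
Definition t4 (t : V4) : R := let '(_, _, _, d) := t in d.

Definition k1 (k : Z4) : Z := let '(a, _, _, _) := k in a.
Definition k2 (k : Z4) : Z := let '(_, b, _, _) := k in b.
Definition k3 (k : Z4) : Z := let '(_, _, c, _) := k in c.
Definition k4 (k : Z4) : Z := let '(_, _, _, d) := k in d.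

Definition vsub (t s : V4) : V4 :=
  (t1 t - t1 s, t2 t - t2 s, t3 t - t3 s, t4 t - t4 s).

Definition vnorm (t : V4) : R :=
  Rmax (Rmax (Rabs (t1 t)) (Rabs (t2 t))) (Rmax (Rabs (t3 t)) (Rabs (t4 t))).

Definition in_Omega_bar (t : V4) : Prop :=
  t1 t + t2 t + t3 t + t4 t = 0 /\
  (-1 <= t1 t - t2 t <= 1) /\ (-1 <= t1 t - t3 t <= 1) /\
  (-1 <= t1 t - t4 t <= 1) /\ (-1 <= t2 t - t3 t <= 1) /\
  (-1 <= t2 t - t4 t <= 1) /\ (-1 <= t3 t - t4 t <= 1).

Definition continuous_on_Omega_bar (f : V4 -> C) : Prop :=
  forall t, in_Omega_bar t -> forall eps, 0 < eps ->
    exists delta, 0 < delta /\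
      forall s, in_Omega_bar s -> vnorm (vsub s t) < delta ->
        Cmod (Cminus (f s) (f t)) < eps.

Definition in_Hn_star (n : nat) (k : Z4) : Prop :=
  (k1 k + k2 k + k3 k + k4 k = 0)%Z /\
  (k1 k mod 4 = k2 k mod 4)%Z /\ (k2 k mod 4 = k3 k mod 4)%Z /\
  (k3 k mod 4 = k4 k mod 4)%Z /\
  (let N := (4 * Z.of_nat n)%Z in
   (- N <= k1 k - k2 k <= N)%Z /\ (- N <= k1 k - k3 k <= N)%Z /\
   (- N <= k1 k - k4 k <= N)%Z /\ (- N <= k2 k - k3 k <= N)%Z /\
   (- N <= k2 k - k4 k <= N)%Z /\ (- N <= k3 k - k4 k <= N)%Z).

Definition zbetween (a x b : Z) : bool := (Z.leb a x && Z.leb x b)%bool.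

Definition in_Hn_starb (n : nat) (k : Z4) : bool :=
  let N := (4 * Z.of_nat n)%Z in
  (Z.eqb (k1 k + k2 k + k3 k + k4 k) 0 &&
   Z.eqb (k1 k mod 4) (k2 k mod 4) && Z.eqb (k2 k mod 4) (k3 k mod 4) &&
   Z.eqb (k3 k mod 4) (k4 k mod 4) &&
   zbetween (- N) (k1 k - k2 k) N && zbetween (- N) (k1 k - k3 k) N &&
   zbetween (- N) (k1 k - k4 k) N && zbetween (- N) (k2 k - k3 k) N &&
   zbetween (- N) (k2 k - k4 k) N && zbetween (- N) (k3 k - k4 k) N)%bool.

(** The integers -4n, ..., 4n.  Every k in H_n^* has |k_i| <= 3n <= 4n
    (k_i = (1/4) sum_j (k_i - k_j)), so the box [-4n,4n]^4 contains H_n^*. *)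
Definition zrange (n : nat) : list Z :=
  map (fun i => (Z.of_nat i - 4 * Z.of_nat n)%Z) (seq 0 (8 * n + 1)).

Definition Hn_star_list (n : nat) : list Z4 :=
  filter (in_Hn_starb n)
    (flat_map (fun a => flat_map (fun b => flat_map (fun c =>
       map (fun d => (a, b, c, d)) (zrange n)) (zrange n)) (zrange n)) (zrange n)).

Definition Csum {A : Type} (l : list A) (F : A -> C) : C :=
  fold_right (fun a acc => Cplus (F a) acc) (RtoC 0) l.

Definition dotZR (k : Z4) (t : V4) : R :=
  IZR (k1 k) * t1 t + IZR (k2 k) * t2 t + IZR (k3 k) * t3 t + IZR (k4 k) * t4 t.

Definition phi (k : Z4) (t : V4) : C :=
  (cos (PI / 2 * dotZR k t), sin (PI / 2 * dotZR k t)).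

Definition zmax4 (k : Z4) : Z := Z.max (Z.max (k1 k) (k2 k)) (Z.max (k3 k) (k4 k)).
Definition zmin4 (k : Z4) : Z := Z.min (Z.min (k1 k) (k2 k)) (Z.min (k3 k) (k4 k)).
Definition count_eq (k : Z4) (v : Z) : nat :=
  length (filter (fun x => Z.eqb x v) [k1 k; k2 k; k3 k; k4 k]).

Definition binomR (m p : nat) : R := INR (fact m) / (INR (fact p) * INR (fact (m - p))).

Definition coef (n : nat) (k : Z4) : R :=
  if Z.ltb (zmax4 k - zmin4 k) (4 * Z.of_nat n) then 1
  else let p := count_eq k (zmax4 k) in
       let q := count_eq k (zmin4 k) in
       / binomR (p + q) p.

Definition Phi_star (n : nat) (t : V4) : C :=
  Cmult (RtoC (/ (4 * INR n ^ 3)))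
        (Csum (Hn_star_list n) (fun k => Cmult (RtoC (coef n k)) (phi k t))).

Definition node (n : nat) (j : Z4) : V4 :=
  let s := / (4 * INR n) in
  (IZR (k1 j) * s, IZR (k2 j) * s, IZR (k3 j) * s, IZR (k4 j) * s).

Definition In_star (n : nat) (f : V4 -> C) (t : V4) : C :=
  Csum (Hn_star_list n) (fun j => Cmult (f (node n j)) (Phi_star n (vsub t (node n j)))).

(* Main.v *)
Require Import Defs.
From Stdlib Require Import Reals ZArith List Lia Permutation Lra.
From Coquelicot Require Import Coquelicot.
Import ListNotations.
Open Scope R_scope.

Definition rsum {A : Type} (l : list A) (f : A -> R) : R :=
  fold_right (fun a acc => f a + acc) 0 l.

Lemma Csum_ext {A} (l : list A) f g :
  (forall x, In x l -> f x = g x) -> Csum l f = Csum l g.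
Proof.
  induction l as [|a l IH]; intros H; simpl; auto.
  rewrite H by (left; auto). rewrite IH; auto. intros; apply H; right; auto.
Qed.

Lemma rsum_ext {A} (l : list A) f g :
  (forall x, In x l -> f x = g x) -> rsum l f = rsum l g.
Proof.
  induction l as [|a l IH]; intros H; simpl; auto.
  rewrite H by (left; auto). rewrite IH; auto. intros; apply H; right; auto.
Qed.

Lemma rsum_le {A} (l : list A) f g :
  (forall x, In x l -> f x <= g x) -> rsum l f <= rsum l g.
Proof.
  induction l as [|a l IH]; intros H; simpl; [lra|].
  apply Rplus_le_compat. apply H; left; auto. apply IH; intros; apply H; right; auto.
Qed.

Lemma rsum_nonneg {A} (l : list A) f :
  (forall x, In x l -> 0 <= f x) -> 0 <= rsum l f.
Proof.
  induction l as [|a l IH]; intros H; simpl; [lra|].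
  apply Rplus_le_le_0_compat. apply H; left; auto. apply IH; intros; apply H; right; auto.
Qed.

Lemma rsum_const_le {A} (l : list A) f c :
  (forall x, In x l -> f x <= c) -> rsum l f <= INR (length l) * c.
Proof.
  induction l as [|a l IH]; intros H. simpl; lra.
  assert (f a <= c) by (apply H; left; auto).
  assert (rsum l f <= INR (length l) * c) by (apply IH; intros; apply H; right; auto).
  replace (rsum (a :: l) f) with (f a + rsum l f) by reflexivity.
  replace (INR (length (a :: l))) with (INR (length l) + 1) by (rewrite <- S_INR; reflexivity).
  lra.
Qed.

Lemma rsum_app {A} (l1 l2 : list A) f : rsum (l1 ++ l2) f = rsum l1 f + rsum l2 f.
Proof. induction l1; simpl; [lra|]. rewrite IHl1; lra. Qed.

Lemma Csum_app {A} (l1 l2 : list A) f : Csum (l1 ++ l2) f = Cplus (Csum l1 f) (Csum l2 f).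
Proof. induction l1; simpl. unfold Csum; simpl. ring. unfold Csum in *; simpl. rewrite IHl1; ring. Qed.

Lemma rsum_map {A B} (l : list A) (h : A -> B) f : rsum (map h l) f = rsum l (fun x => f (h x)).
Proof. induction l; simpl; auto. rewrite IHl; auto. Qed.

Lemma Csum_map {A B} (l : list A) (h : A -> B) f : Csum (map h l) f = Csum l (fun x => f (h x)).
Proof. induction l; simpl; auto. unfold Csum in *; simpl. rewrite IHl; auto. Qed.

Lemma rsum_flat_map {A B} (l : list A) (h : A -> list B) f :
  rsum (flat_map h l) f = rsum l (fun x => rsum (h x) f).
Proof. induction l; simpl; auto. rewrite rsum_app, IHl; auto. Qed.

Lemma Csum_flat_map {A B} (l : list A) (h : A -> list B) f :
  Csum (flat_map h l) f = Csum l (fun x => Csum (h x) f).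
Proof. induction l; simpl; auto. rewrite Csum_app. unfold Csum in *; simpl. rewrite IHl; auto. Qed.

Lemma rsum_scal_l {A} (l : list A) c f : rsum l (fun x => c * f x) = c * rsum l f.
Proof. induction l; simpl; [ring|]. rewrite IHl; ring. Qed.

Lemma rsum_scal_r {A} (l : list A) c f : rsum l (fun x => f x * c) = rsum l f * c.
Proof. induction l; simpl; [ring|]. rewrite IHl; ring. Qed.

Lemma Csum_scal_l {A} (l : list A) c f : Csum l (fun x => Cmult c (f x)) = Cmult c (Csum l f).
Proof. induction l; unfold Csum in *; simpl. ring. rewrite IHl; ring. Qed.

Lemma Csum_scal_r {A} (l : list A) c f : Csum l (fun x => Cmult (f x) c) = Cmult (Csum l f) c.
Proof. induction l; unfold Csum in *; simpl. ring. rewrite IHl; ring. Qed.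

Lemma Csum_plus {A} (l : list A) f g :
  Csum l (fun x => Cplus (f x) (g x)) = Cplus (Csum l f) (Csum l g).
Proof. induction l; unfold Csum in *; simpl. ring. rewrite IHl; ring. Qed.

Lemma Csum_zero {A} (l : list A) f : (forall x, In x l -> f x = RtoC 0) -> Csum l f = RtoC 0.
Proof.
  induction l; intros H; unfold Csum in *; simpl; auto.
  rewrite H by (left; auto). rewrite IHl. ring. intros; apply H; right; auto.
Qed.

Lemma Csum_cons {A} (a : A) l f : Csum (a :: l) f = Cplus (f a) (Csum l f).
Proof. reflexivity. Qed.

Lemma Csum_swap {A B} (l1 : list A) (l2 : list B) (F : A -> B -> C) :
  Csum l1 (fun a => Csum l2 (fun b => F a b)) = Csum l2 (fun b => Csum l1 (fun a => F a b)).
Proof.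
  induction l1.
  - symmetry; apply Csum_zero; intros; reflexivity.
  - rewrite Csum_cons, IHl1, <- Csum_plus. apply Csum_ext; intros. rewrite Csum_cons; auto.
Qed.

Lemma Csum_filter {A} (l : list A) (P : A -> bool) f :
  Csum (filter P l) f = Csum l (fun x => if P x then f x else RtoC 0).
Proof.
  induction l; simpl; auto. destruct (P a); unfold Csum in *; simpl; rewrite IHl; auto. ring.
Qed.

Lemma rsum_filter {A} (l : list A) (P : A -> bool) f :
  rsum (filter P l) f = rsum l (fun x => if P x then f x else 0).
Proof.
  induction l; simpl; auto. destruct (P a); simpl; rewrite IHl; auto. ring.
Qed.

Lemma Csum_perm {A} (l l' : list A) f : Permutation l l' -> Csum l f = Csum l' f.
Proof.
  induction 1; unfold Csum in *; simpl; auto.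
  rewrite IHPermutation; auto. ring. congruence.
Qed.

Lemma Cmod_Csum_le {A} (l : list A) f : Cmod (Csum l f) <= rsum l (fun x => Cmod (f x)).
Proof.
  induction l; unfold Csum in *; simpl. rewrite Cmod_0; lra.
  eapply Rle_trans. apply Cmod_triangle. lra.
Qed.

Lemma rsum_remove_le {A} (dec : forall x y : A, {x = y} + {x <> y}) (l : list A) a f :
  (forall x, 0 <= f x) -> rsum (remove dec a l) f <= rsum l f.
Proof.
  intros Hf; induction l as [|b l IH]; simpl; [lra|].
  destruct (dec a b); simpl; specialize (Hf b); lra.
Qed.

Lemma rsum_remove {A} (dec : forall x y : A, {x = y} + {x <> y}) (l : list A) a f :
  (forall x, 0 <= f x) -> In a l -> f a + rsum (remove dec a l) f <= rsum l f.
Proof.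
  intros Hf; induction l as [|b l IH]; simpl; [tauto|]. intros [->|Hin].
  - destruct (dec a a) as [_|n]; [|congruence]. pose proof (rsum_remove_le dec l a f Hf); lra.
  - destruct (dec a b) as [->|n].
    + pose proof (rsum_remove_le dec l b f Hf); pose proof (Hf b); lra.
    + simpl. specialize (IH Hin). lra.
Qed.

Lemma rsum_incl {A} (dec : forall x y : A, {x = y} + {x <> y}) (l1 l2 : list A) f :
  NoDup l1 -> incl l1 l2 -> (forall x, 0 <= f x) -> rsum l1 f <= rsum l2 f.
Proof.
  revert l2. induction l1 as [|a l1 IH]; intros l2 Hnd Hinc Hf; simpl.
  - apply rsum_nonneg; auto.
  - inversion Hnd; subst.
    assert (Ha : In a l2) by (apply Hinc; left; auto).
    pose proof (rsum_remove dec l2 a f Hf Ha).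
    assert (rsum l1 f <= rsum (remove dec a l2) f).
    { apply IH; auto. intros x Hx. apply in_in_remove. intros ->; contradiction.
      apply Hinc; right; auto. }
    lra.
Qed.

Definition E (a : R) : C := (cos a, sin a).

Lemma E_add a b : E (a + b) = Cmult (E a) (E b).
Proof.
  unfold E, Cmult. simpl. rewrite cos_plus, sin_plus. f_equal; ring.
Qed.

Lemma E_0 : E 0 = RtoC 1.
Proof. unfold E, RtoC. rewrite cos_0, sin_0. reflexivity. Qed.

Lemma Cmod_E a : Cmod (E a) = 1.
Proof.
  unfold Cmod, E; simpl. replace (cos a * (cos a * 1) + sin a * (sin a * 1)) with 1.
  apply sqrt_1. pose proof (sin2_cos2 a). unfold Rsqr in H. lra.
Qed.

Definition ee (m : nat) (th : R) : C := E (INR m * (2 * PI * th)).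

Lemma geom (ph : R) (s L : nat) :
  Cmult (Cminus (E ph) (RtoC 1)) (Csum (seq s L) (fun m => E (INR m * ph)))
  = Cminus (E (INR (s + L) * ph)) (E (INR s * ph)).
Proof.
  revert s; induction L; intros s.
  - simpl. rewrite Nat.add_0_r. unfold Csum; simpl. ring.
  - simpl seq. rewrite Csum_cons.
    replace (Cmult (Cminus (E ph) (RtoC 1)) (Cplus (E (INR s * ph)) (Csum (seq (S s) L) (fun m : nat => E (INR m * ph)))))
      with (Cplus (Cmult (Cminus (E ph) (RtoC 1)) (E (INR s * ph)))
                  (Cmult (Cminus (E ph) (RtoC 1)) (Csum (seq (S s) L) (fun m : nat => E (INR m * ph))))) by ring.
    rewrite IHL. replace (S s + L)%nat with (s + S L)%nat by lia.
    rewrite S_INR. replace ((INR s + 1) * ph) with (INR s * ph + ph) by ring.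
    rewrite E_add. ring.
Qed.

Lemma Cmod_E_minus_1 ph : Cmod (Cminus (E ph) (RtoC 1)) = 2 * Rabs (sin (ph / 2)).
Proof.
  unfold Cmod, E, Cminus, Cplus, Copp, RtoC; simpl.
  set (h := ph / 2). replace ph with (2 * h) by (unfold h; field).
  rewrite cos_2a_sin, sin_2a.
  set (s := sin h). set (c := cos h).
  replace ((1 - 2 * s * s + - (1)) * ((1 - 2 * s * s + - (1)) * 1) + (2 * s * c + - 0) * ((2 * s * c + - 0) * 1))
    with (Rsqr (2 * s) * (s * s + c * c)) by (unfold Rsqr; ring).
  replace (s * s + c * c) with 1.
  rewrite Rmult_1_r, sqrt_Rsqr_abs, Rabs_mult, Rabs_pos_eq by lra. ring.
  pose proof (sin2_cos2 h). unfold Rsqr in H. unfold s, c. lra.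
Qed.

Lemma Cmod_minus_le a b : Cmod (Cminus a b) <= Cmod a + Cmod b.
Proof.
  unfold Cminus. eapply Rle_trans. apply Cmod_triangle. rewrite Cmod_opp. lra.
Qed.

Lemma geom_bound (th : R) (s L : nat) :
  Cmod (Csum (seq s L) (fun m => ee m th)) * Rabs (sin (PI * th)) <= 1.
Proof.
  unfold ee. pose proof (geom (2 * PI * th) s L) as G.
  apply (f_equal Cmod) in G. rewrite Cmod_mult, Cmod_E_minus_1 in G.
  replace (2 * PI * th / 2) with (PI * th) in G by field.
  pose proof (Cmod_minus_le (E (INR (s + L) * (2 * PI * th))) (E (INR s * (2 * PI * th)))).
  rewrite !Cmod_E in H. lra.
Qed.

Lemma Cmod_Csum_count {A} (l : list A) f :
  (forall x, In x l -> Cmod (f x) <= 1) -> Cmod (Csum l f) <= INR (length l).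
Proof.
  intros H. eapply Rle_trans. apply Cmod_Csum_le.
  eapply Rle_trans. apply rsum_const_le. exact H. lra.
Qed.

Definition Kf (n : nat) (th : R) : R := / Rmax (Rabs (sin (PI * th))) (/ (INR n + 1)).

Lemma Kf_ge_1 n th : 1 <= Kf n th.
Proof.
  unfold Kf. assert (Hb : 0 < / (INR n + 1)) by (apply Rinv_0_lt_compat; pose proof (pos_INR n); lra).
  assert (Hb1 : / (INR n + 1) <= 1).
  { apply Rle_trans with (/ 1). apply Rinv_le_contravar. lra. pose proof (pos_INR n); lra. rewrite Rinv_1; lra. }
  assert (Ha : Rabs (sin (PI * th)) <= 1) by (apply Rabs_le; apply SIN_bound).
  assert (0 < Rmax (Rabs (sin (PI * th))) (/ (INR n + 1))) by (eapply Rlt_le_trans; [exact Hb|apply Rmax_r]).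
  apply Rle_trans with (/ 1). rewrite Rinv_1; lra. apply Rinv_le_contravar; auto.
  apply Rmax_lub; lra.
Qed.

Lemma seq_sum_bound n th s L : (L <= S n)%nat ->
  Cmod (Csum (seq s L) (fun m => ee m th)) <= Kf n th.
Proof.
  intros HL. unfold Kf.
  assert (Hb : 0 < / (INR n + 1)) by (apply Rinv_0_lt_compat; pose proof (pos_INR n); lra).
  pose proof (geom_bound th s L) as G.
  destruct (Rle_dec (/ (INR n + 1)) (Rabs (sin (PI * th)))) as [h|h].
  - rewrite Rmax_left by lra. apply Rmult_le_reg_r with (Rabs (sin (PI * th))). lra.
    rewrite Rinv_l by lra. exact G.
  - rewrite Rmax_right by lra. rewrite Rinv_inv.
    eapply Rle_trans. apply Cmod_Csum_count. intros; unfold ee; rewrite Cmod_E; lra.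
    rewrite length_seq. apply le_INR in HL. rewrite S_INR in HL. lra.
Qed.

Definition box4 {A : Type} (l : list A) : list (A * A * A * A) :=
  flat_map (fun a => flat_map (fun b => flat_map (fun c =>
     map (fun d => (a, b, c, d)) l) l) l) l.

Lemma Csum_box4 {A} (l : list A) F :
  Csum (box4 l) F = Csum l (fun a => Csum l (fun b => Csum l (fun c => Csum l (fun d => F (a,b,c,d))))).
Proof.
  unfold box4. rewrite Csum_flat_map. apply Csum_ext; intros a _.
  rewrite Csum_flat_map. apply Csum_ext; intros b _.
  rewrite Csum_flat_map. apply Csum_ext; intros c _.
  rewrite Csum_map. reflexivity.
Qed.

Lemma rsum_box4 {A} (l : list A) F :
  rsum (box4 l) F = rsum l (fun a => rsum l (fun b => rsum l (fun c => rsum l (fun d => F (a,b,c,d))))).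
Proof.
  unfold box4. rewrite rsum_flat_map. apply rsum_ext; intros a _.
  rewrite rsum_flat_map. apply rsum_ext; intros b _.
  rewrite rsum_flat_map. apply rsum_ext; intros c _.
  rewrite rsum_map. reflexivity.
Qed.

Lemma Csum_box4_prod {A} (l : list A) f1 f2 f3 f4 :
  Csum (box4 l) (fun m => let '(a, b, c, d) := m in Cmult (Cmult (Cmult (f1 a) (f2 b)) (f3 c)) (f4 d))
  = Cmult (Cmult (Cmult (Csum l f1) (Csum l f2)) (Csum l f3)) (Csum l f4).
Proof.
  rewrite Csum_box4.
  transitivity (Csum l (fun a => Cmult (f1 a) (Cmult (Cmult (Csum l f2) (Csum l f3)) (Csum l f4)))).
  - apply Csum_ext; intros a _.
    transitivity (Csum l (fun b => Cmult (Cmult (f1 a) (f2 b)) (Cmult (Csum l f3) (Csum l f4)))).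
    + apply Csum_ext; intros b _.
      transitivity (Csum l (fun c => Cmult (Cmult (Cmult (f1 a) (f2 b)) (f3 c)) (Csum l f4))).
      * apply Csum_ext; intros c _. apply Csum_scal_l.
      * rewrite Csum_scal_r, Csum_scal_l. ring.
    + rewrite Csum_scal_r, Csum_scal_l. ring.
  - rewrite Csum_scal_r. ring.
Qed.

Inductive cl := CZ | CM | CN.
Definition cl_eqb (a b : cl) : bool :=
  match a, b with CZ, CZ | CM, CM | CN, CN => true | _, _ => false end.
Definition clf (n m : nat) : cl := if Nat.eqb m 0 then CZ else if Nat.eqb m n then CN else CM.
Definition allcl : list cl := [CZ; CM; CN].

Lemma sum_allcl (b : cl) (H : cl -> C) :
  (forall a, cl_eqb b a = false -> H a = RtoC 0) -> Csum allcl H = H b.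
Proof.
  intros Hz. unfold allcl, Csum; simpl.
  destruct b; rewrite ?(Hz CZ), ?(Hz CM), ?(Hz CN) by reflexivity; ring.
Qed.

Lemma expand4 (g : cl * cl * cl * cl -> R) (b1 b2 b3 b4 : cl) (y1 y2 y3 y4 : C) :
  Csum (box4 allcl) (fun a => let '(a1, a2, a3, a4) := a in
     Cmult (RtoC (g (a1, a2, a3, a4)))
       (Cmult (Cmult (Cmult (if cl_eqb b1 a1 then y1 else RtoC 0) (if cl_eqb b2 a2 then y2 else RtoC 0))
               (if cl_eqb b3 a3 then y3 else RtoC 0)) (if cl_eqb b4 a4 then y4 else RtoC 0)))
  = Cmult (RtoC (g (b1, b2, b3, b4))) (Cmult (Cmult (Cmult y1 y2) y3) y4).
Proof.
  rewrite Csum_box4.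
  assert (Eb : forall b, cl_eqb b b = true) by (destruct b; reflexivity).
  rewrite (sum_allcl b1).
  2:{ intros a Ha. apply Csum_zero; intros; apply Csum_zero; intros; apply Csum_zero; intros.
      rewrite Ha. ring. }
  rewrite (sum_allcl b2).
  2:{ intros a Ha. apply Csum_zero; intros; apply Csum_zero; intros. rewrite Ha. ring. }
  rewrite (sum_allcl b3).
  2:{ intros a Ha. apply Csum_zero; intros. rewrite Ha. ring. }
  rewrite (sum_allcl b4).
  2:{ intros a Ha. rewrite Ha. ring. }
  rewrite !Eb. reflexivity.
Qed.

Definition Fc (n : nat) (c : cl) (th : R) : C :=
  Csum (seq 0 (S n)) (fun m => if cl_eqb (clf n m) c then ee m th else RtoC 0).

Lemma ee_0 th : ee 0 th = RtoC 1.
Proof. unfold ee. simpl. rewrite Rmult_0_l. apply E_0. Qed.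

Lemma Cmod_ee m th : Cmod (ee m th) = 1.
Proof. apply Cmod_E. Qed.

Lemma Fc_Z n th : (1 <= n)%nat -> Fc n CZ th = RtoC 1.
Proof.
  intros Hn. unfold Fc. simpl seq. rewrite Csum_cons.
  unfold clf at 1; simpl. rewrite ee_0. rewrite Csum_zero. ring.
  intros m Hm. apply in_seq in Hm. unfold clf.
  destruct (Nat.eqb_spec m 0); [lia|]. destruct (Nat.eqb m n); reflexivity.
Qed.

Lemma Fc_bound n c th : (1 <= n)%nat -> Cmod (Fc n c th) <= Kf n th.
Proof.
  intros Hn. pose proof (Kf_ge_1 n th).
  destruct c.
  - rewrite Fc_Z by auto. rewrite Cmod_1. lra.
  - unfold Fc. destruct n as [|n']; [lia|].
    rewrite seq_S. rewrite Csum_app. simpl seq. rewrite Csum_cons.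
    unfold clf at 1; simpl Nat.eqb; simpl cl_eqb.
    replace (Csum [(0 + S n')%nat] _) with (RtoC 0).
    2:{ unfold Csum; simpl. unfold clf. replace (Nat.eqb (S n') (S n')) with true by (symmetry; apply Nat.eqb_refl). simpl. ring. }
    rewrite (Csum_ext _ _ (fun m => ee m th)).
    2:{ intros m Hm. apply in_seq in Hm. unfold clf.
        destruct (Nat.eqb_spec m 0); [lia|]. destruct (Nat.eqb_spec m (S n')); [lia|]. reflexivity. }
    replace (Cplus (Cplus (RtoC 0) (Csum (seq 1 n') (fun m : nat => ee m th))) (RtoC 0))
      with (Csum (seq 1 n') (fun m : nat => ee m th)) by ring.
    apply seq_sum_bound. lia.
  - unfold Fc. destruct n as [|n']; [lia|].
    rewrite seq_S. rewrite Csum_app. rewrite Csum_zero.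
    2:{ intros m Hm. apply in_seq in Hm. unfold clf.
        destruct (Nat.eqb_spec m 0); [reflexivity|]. destruct (Nat.eqb_spec m (S n')); [lia|]. reflexivity. }
    unfold Csum; simpl. unfold clf. replace (Nat.eqb (S n') (S n')) with true by (symmetry; apply Nat.eqb_refl).
    simpl. replace (Cplus (RtoC 0) (Cplus (ee (S n') th) (RtoC 0))) with (ee (S n') th) by ring.
    rewrite Cmod_ee. lra.
Qed.

Lemma box_expand n (g : cl * cl * cl * cl -> R) x1 x2 x3 x4 :
  Csum (box4 (seq 0 (S n))) (fun m => let '(m1, m2, m3, m4) := m in
     Cmult (RtoC (g (clf n m1, clf n m2, clf n m3, clf n m4)))
           (Cmult (Cmult (Cmult (ee m1 x1) (ee m2 x2)) (ee m3 x3)) (ee m4 x4)))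
  = Csum (box4 allcl) (fun a => let '(a1, a2, a3, a4) := a in
     Cmult (RtoC (g (a1, a2, a3, a4)))
           (Cmult (Cmult (Cmult (Fc n a1 x1) (Fc n a2 x2)) (Fc n a3 x3)) (Fc n a4 x4))).
Proof.
  symmetry.
  transitivity (Csum (box4 allcl) (fun a => Csum (box4 (seq 0 (S n))) (fun m =>
     let '(a1, a2, a3, a4) := a in let '(m1, m2, m3, m4) := m in
     Cmult (RtoC (g (a1, a2, a3, a4)))
       (Cmult (Cmult (Cmult (if cl_eqb (clf n m1) a1 then ee m1 x1 else RtoC 0)
                            (if cl_eqb (clf n m2) a2 then ee m2 x2 else RtoC 0))
                     (if cl_eqb (clf n m3) a3 then ee m3 x3 else RtoC 0))
              (if cl_eqb (clf n m4) a4 then ee m4 x4 else RtoC 0))))).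
  - apply Csum_ext. intros [[[a1 a2] a3] a4] _.
    unfold Fc. rewrite <- Csum_box4_prod. rewrite <- Csum_scal_l.
    apply Csum_ext. intros [[[m1 m2] m3] m4] _. reflexivity.
  - rewrite Csum_swap. apply Csum_ext. intros [[[m1 m2] m3] m4] _.
    rewrite <- (expand4 g (clf n m1) (clf n m2) (clf n m3) (clf n m4)).
    apply Csum_ext. intros [[[a1 a2] a3] a4] _. reflexivity.
Qed.

Definition hasZ (a : cl * cl * cl * cl) : bool :=
  let '(a1, a2, a3, a4) := a in
  (cl_eqb a1 CZ || cl_eqb a2 CZ || cl_eqb a3 CZ || cl_eqb a4 CZ)%bool.

Definition Qf n x1 x2 x3 x4 : R :=
  Kf n x2 * Kf n x3 * Kf n x4 + Kf n x1 * Kf n x3 * Kf n x4 +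
  Kf n x1 * Kf n x2 * Kf n x4 + Kf n x1 * Kf n x2 * Kf n x3.

Lemma Qf_nonneg n x1 x2 x3 x4 : 0 <= Qf n x1 x2 x3 x4.
Proof.
  unfold Qf. pose proof (Kf_ge_1 n x1). pose proof (Kf_ge_1 n x2).
  pose proof (Kf_ge_1 n x3). pose proof (Kf_ge_1 n x4).
  repeat apply Rplus_le_le_0_compat; repeat apply Rmult_le_pos; lra.
Qed.

Lemma expand_bound n (g : cl * cl * cl * cl -> R) x1 x2 x3 x4 : (1 <= n)%nat ->
  (forall a, hasZ a = false -> g a = 0) -> (forall a, Rabs (g a) <= 1) ->
  Cmod (Csum (box4 allcl) (fun a => let '(a1, a2, a3, a4) := a in
     Cmult (RtoC (g (a1, a2, a3, a4)))
           (Cmult (Cmult (Cmult (Fc n a1 x1) (Fc n a2 x2)) (Fc n a3 x3)) (Fc n a4 x4))))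
  <= 81 * Qf n x1 x2 x3 x4.
Proof.
  intros Hn Hz Hg.
  eapply Rle_trans. apply Cmod_Csum_le.
  replace 81 with (INR (length (box4 allcl))) by (simpl; lra).
  apply rsum_const_le. intros [[[a1 a2] a3] a4] _.
  rewrite !Cmod_mult, Cmod_R.
  pose proof (Fc_bound n a1 x1 Hn). pose proof (Fc_bound n a2 x2 Hn).
  pose proof (Fc_bound n a3 x3 Hn). pose proof (Fc_bound n a4 x4 Hn).
  pose proof (Kf_ge_1 n x1). pose proof (Kf_ge_1 n x2).
  pose proof (Kf_ge_1 n x3). pose proof (Kf_ge_1 n x4).
  pose proof (Cmod_ge_0 (Fc n a1 x1)). pose proof (Cmod_ge_0 (Fc n a2 x2)).
  pose proof (Cmod_ge_0 (Fc n a3 x3)). pose proof (Cmod_ge_0 (Fc n a4 x4)).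
  specialize (Hg (a1, a2, a3, a4)). pose proof (Rabs_pos (g (a1, a2, a3, a4))).
  assert (Z1: a1 = CZ -> Cmod (Fc n a1 x1) = 1) by (intros HH; rewrite HH, Fc_Z, Cmod_1; auto).
  assert (Z2: a2 = CZ -> Cmod (Fc n a2 x2) = 1) by (intros HH; rewrite HH, Fc_Z, Cmod_1; auto).
  assert (Z3: a3 = CZ -> Cmod (Fc n a3 x3) = 1) by (intros HH; rewrite HH, Fc_Z, Cmod_1; auto).
  assert (Z4: a4 = CZ -> Cmod (Fc n a4 x4) = 1) by (intros HH; rewrite HH, Fc_Z, Cmod_1; auto).
  set (G := Rabs (g (a1, a2, a3, a4))) in *.
  set (c1 := Cmod (Fc n a1 x1)) in *. set (c2 := Cmod (Fc n a2 x2)) in *.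
  set (c3 := Cmod (Fc n a3 x3)) in *. set (c4 := Cmod (Fc n a4 x4)) in *.
  pose proof (Qf_nonneg n x1 x2 x3 x4).
  destruct (hasZ (a1, a2, a3, a4)) eqn:HZ.
  2:{ unfold G. rewrite (Hz _ HZ), Rabs_R0. lra. }
  assert (P : c1 * c2 * c3 * c4 <= Qf n x1 x2 x3 x4).
  { assert (HC : a1 = CZ \/ a2 = CZ \/ a3 = CZ \/ a4 = CZ)
      by (destruct a1, a2, a3, a4; simpl in HZ; try discriminate; tauto).
    unfold Qf.
    set (k1 := Kf n x1) in *. set (k2 := Kf n x2) in *. set (k3 := Kf n x3) in *. set (k4 := Kf n x4) in *.
    assert (T : forall u1 u2 u3 v1 v2 v3 : R, 0 <= u1 <= v1 -> 0 <= u2 <= v2 -> 0 <= u3 <= v3 ->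
                u1 * u2 * u3 <= v1 * v2 * v3).
    { intros. apply Rmult_le_compat; try apply Rmult_le_compat; try apply Rmult_le_pos; lra. }
    assert (0 <= k1 * k2 * k3 /\ 0 <= k1 * k2 * k4 /\ 0 <= k1 * k3 * k4 /\ 0 <= k2 * k3 * k4)
      by (repeat split; repeat apply Rmult_le_pos; lra).
    destruct HC as [HC|[HC|[HC|HC]]].
    - assert (EE : c1 = 1) by (apply Z1; exact HC).
      pose proof (T c2 c3 c4 k2 k3 k4 ltac:(lra) ltac:(lra) ltac:(lra)).
      replace (c1 * c2 * c3 * c4) with (c2 * c3 * c4) by (rewrite EE; ring). lra.
    - assert (EE : c2 = 1) by (apply Z2; exact HC).
      pose proof (T c1 c3 c4 k1 k3 k4 ltac:(lra) ltac:(lra) ltac:(lra)).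
      replace (c1 * c2 * c3 * c4) with (c1 * c3 * c4) by (rewrite EE; ring). lra.
    - assert (EE : c3 = 1) by (apply Z3; exact HC).
      pose proof (T c1 c2 c4 k1 k2 k4 ltac:(lra) ltac:(lra) ltac:(lra)).
      replace (c1 * c2 * c3 * c4) with (c1 * c2 * c4) by (rewrite EE; ring). lra.
    - assert (EE : c4 = 1) by (apply Z4; exact HC).
      pose proof (T c1 c2 c3 k1 k2 k3 ltac:(lra) ltac:(lra) ltac:(lra)).
      replace (c1 * c2 * c3 * c4) with (c1 * c2 * c3) by (rewrite EE; ring). lra. }
  assert (0 <= c1 * c2 * c3 * c4) by (repeat apply Rmult_le_pos; lra).
  replace (G * (c1 * c2 * c3 * c4)) with (G * (c1 * c2 * c3 * c4)) by ring.
  apply Rle_trans with (1 * (c1 * c2 * c3 * c4)). apply Rmult_le_compat_r; lra. lra.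
Qed.

Lemma NoDup_flat_map_key {A B} (l : list A) (f : A -> list B) (key : B -> A) :
  NoDup l -> (forall a, In a l -> NoDup (f a)) -> (forall a x, In x (f a) -> key x = a) ->
  NoDup (flat_map f l).
Proof.
  induction l as [|a l IH]; intros Hl Hf Hk; simpl. constructor.
  inversion Hl; subst. apply NoDup_app.
  - apply Hf; left; auto.
  - apply IH; auto. intros; apply Hf; right; auto.
  - intros x Hx Hx2. apply in_flat_map in Hx2. destruct Hx2 as [b [Hb Hxb]].
    apply Hk in Hx. apply Hk in Hxb. subst. congruence.
Qed.

Lemma NoDup_box4 {A} (l : list A) : NoDup l -> NoDup (box4 l).
Proof.
  intros Hl. unfold box4.
  apply NoDup_flat_map_key with (key := fun x => fst (fst (fst x))); auto.
  2:{ intros a x Hx. apply in_flat_map in Hx; destruct Hx as [b [_ Hx]].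
      apply in_flat_map in Hx; destruct Hx as [c [_ Hx]]. apply in_map_iff in Hx.
      destruct Hx as [d [<- _]]. reflexivity. }
  intros a _.
  apply NoDup_flat_map_key with (key := fun x => snd (fst (fst x))); auto.
  2:{ intros b x Hx. apply in_flat_map in Hx; destruct Hx as [c [_ Hx]]. apply in_map_iff in Hx.
      destruct Hx as [d [<- _]]. reflexivity. }
  intros b _.
  apply NoDup_flat_map_key with (key := fun x => snd (fst x)); auto.
  2:{ intros c x Hx. apply in_map_iff in Hx. destruct Hx as [d [<- _]]. reflexivity. }
  intros c _. apply FinFun.Injective_map_NoDup_in; auto.
  intros x y _ _ H. inversion H; auto.
Qed.

Lemma in_box4 {A} (l : list A) a b c d :
  In (a, b, c, d) (box4 l) <-> In a l /\ In b l /\ In c l /\ In d l.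
Proof.
  unfold box4. rewrite in_flat_map. split.
  - intros [a' [Ha H]]. apply in_flat_map in H. destruct H as [b' [Hb H]].
    apply in_flat_map in H. destruct H as [c' [Hc H]]. apply in_map_iff in H.
    destruct H as [d' [Heq Hd]]. inversion Heq; subst. auto.
  - intros [Ha [Hb [Hc Hd]]]. exists a; split; auto. apply in_flat_map. exists b; split; auto.
    apply in_flat_map. exists c; split; auto. apply in_map_iff. exists d; auto.
Qed.

Lemma in_zrange n z : In z (zrange n) <-> (- 4 * Z.of_nat n <= z <= 4 * Z.of_nat n)%Z.
Proof.
  unfold zrange. rewrite in_map_iff. split.
  - intros [i [<- Hi]]. apply in_seq in Hi. lia.
  - intros H. exists (Z.to_nat (z + 4 * Z.of_nat n)). split. lia. apply in_seq. lia.
Qed.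

Lemma NoDup_zrange n : NoDup (zrange n).
Proof.
  unfold zrange. apply FinFun.Injective_map_NoDup_in. intros x y _ _ H. lia. apply seq_NoDup.
Qed.

Lemma Hn_star_list_eq n : Hn_star_list n = filter (in_Hn_starb n) (box4 (zrange n)).
Proof. reflexivity. Qed.

Lemma in_Hn_starb_iff n k1 k2 k3 k4 :
  in_Hn_starb n (k1, k2, k3, k4) = true <->
  (k1 + k2 + k3 + k4 = 0 /\ k1 mod 4 = k2 mod 4 /\ k2 mod 4 = k3 mod 4 /\ k3 mod 4 = k4 mod 4 /\
   - (4 * Z.of_nat n) <= k1 - k2 <= 4 * Z.of_nat n /\ - (4 * Z.of_nat n) <= k1 - k3 <= 4 * Z.of_nat n /\
   - (4 * Z.of_nat n) <= k1 - k4 <= 4 * Z.of_nat n /\ - (4 * Z.of_nat n) <= k2 - k3 <= 4 * Z.of_nat n /\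
   - (4 * Z.of_nat n) <= k2 - k4 <= 4 * Z.of_nat n /\ - (4 * Z.of_nat n) <= k3 - k4 <= 4 * Z.of_nat n)%Z.
Proof.
  unfold in_Hn_starb, zbetween; simpl.
  rewrite !Bool.andb_true_iff, !Z.eqb_eq, !Z.leb_le. tauto.
Qed.

Definition kmap (m : nat * nat * nat * nat) : Z4 :=
  let '(a, b, c, d) := m in
  let S := Z.of_nat (a + b + c + d) in
  (4 * Z.of_nat a - S, 4 * Z.of_nat b - S, 4 * Z.of_nat c - S, 4 * Z.of_nat d - S)%Z.

Lemma kmap_eq a b c d : kmap (a, b, c, d) =
  (4 * Z.of_nat a - Z.of_nat (a + b + c + d), 4 * Z.of_nat b - Z.of_nat (a + b + c + d),
   4 * Z.of_nat c - Z.of_nat (a + b + c + d), 4 * Z.of_nat d - Z.of_nat (a + b + c + d))%Z.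
Proof. reflexivity. Qed.

Definition minz (m : nat * nat * nat * nat) : bool :=
  let '(a, b, c, d) := m in (Nat.eqb a 0 || Nat.eqb b 0 || Nat.eqb c 0 || Nat.eqb d 0)%bool.

Definition Bx n := box4 (seq 0 (S n)).

Lemma mod4_lin a S : ((4 * a - S) mod 4 = (- S) mod 4)%Z.
Proof.
  replace (4 * a - S)%Z with (- S + a * 4)%Z by ring. apply Z_mod_plus_full.
Qed.

Lemma kmap_in n m : In m (filter minz (Bx n)) -> In (kmap m) (Hn_star_list n).
Proof.
  destruct m as [[[a b] c] d]. rewrite filter_In. unfold Bx. rewrite in_box4, !in_seq.
  intros [[Ha [Hb [Hc Hd]]] Hm]. rewrite Hn_star_list_eq, filter_In. rewrite kmap_eq. split.
  - apply in_box4. rewrite !in_zrange. lia.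
  - apply in_Hn_starb_iff. rewrite !mod4_lin. lia.
Qed.

Lemma kmap_surj n k : In k (Hn_star_list n) -> exists m, In m (filter minz (Bx n)) /\ kmap m = k.
Proof.
  destruct k as [[[k1 k2] k3] k4]. rewrite Hn_star_list_eq, filter_In, in_Hn_starb_iff.
  intros [_ [Hs [H12 [H23 [H34 Hd]]]]].
  set (r := (k4 mod 4)%Z).
  assert (E1 : (k1 = 4 * (k1 / 4) + r)%Z) by (unfold r; rewrite <- H34, <- H23, <- H12; apply Z.div_mod; lia).
  assert (E2 : (k2 = 4 * (k2 / 4) + r)%Z) by (unfold r; rewrite <- H34, <- H23; apply Z.div_mod; lia).
  assert (E3 : (k3 = 4 * (k3 / 4) + r)%Z) by (unfold r; rewrite <- H34; apply Z.div_mod; lia).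
  assert (E4 : (k4 = 4 * (k4 / 4) + r)%Z) by (unfold r; apply Z.div_mod; lia).
  set (q1 := (k1 / 4)%Z) in *. set (q2 := (k2 / 4)%Z) in *. set (q3 := (k3 / 4)%Z) in *. set (q4 := (k4 / 4)%Z) in *.
  clearbody q1 q2 q3 q4 r.
  set (qm := Z.min (Z.min q1 q2) (Z.min q3 q4)).
  exists (Z.to_nat (q1 - qm), Z.to_nat (q2 - qm), Z.to_nat (q3 - qm), Z.to_nat (q4 - qm)).
  split.
  - rewrite filter_In. unfold Bx. rewrite in_box4, !in_seq. split. unfold qm; lia.
    simpl. unfold qm. rewrite !Bool.orb_true_iff, !Nat.eqb_eq. lia.
  - rewrite kmap_eq. unfold qm. f_equal; [f_equal; [f_equal|]|]; lia.
Qed.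

Lemma kmap_inj n m m' : In m (filter minz (Bx n)) -> In m' (filter minz (Bx n)) -> kmap m = kmap m' -> m = m'.
Proof.
  destruct m as [[[a b] c] d]. destruct m' as [[[a' b'] c'] d'].
  rewrite !filter_In, !kmap_eq. unfold minz. rewrite !Bool.orb_true_iff, !Nat.eqb_eq.
  intros [_ H1] [_ H2] H. apply pair_equal_spec in H. destruct H as [H Hd]. apply pair_equal_spec in H. destruct H as [H Hc]. apply pair_equal_spec in H. destruct H as [Ha Hb]. f_equal; [f_equal; [f_equal|]|]; lia.
Qed.

Lemma Hn_perm n : Permutation (map kmap (filter minz (Bx n))) (Hn_star_list n).
Proof.
  apply NoDup_Permutation.
  - apply FinFun.Injective_map_NoDup_in. intros x y Hx Hy. apply (kmap_inj n); auto.
    apply NoDup_filter. apply NoDup_box4. apply seq_NoDup.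
  - rewrite Hn_star_list_eq. apply NoDup_filter. apply NoDup_box4. apply NoDup_zrange.
  - intros k; split.
    + intros Hk. apply in_map_iff in Hk. destruct Hk as [m [<- Hm]]. apply kmap_in; auto.
    + intros Hk. destruct (kmap_surj n k Hk) as [m [Hm <-]]. apply in_map; auto.
Qed.

Definition cnt (c : cl) (a : cl * cl * cl * cl) : nat :=
  let '(a1, a2, a3, a4) := a in length (filter (fun y => cl_eqb y c) [a1; a2; a3; a4]).

Definition gw (a : cl * cl * cl * cl) : R :=
  if hasZ a then (if Nat.eqb (cnt CN a) 0 then 1 else / binomR (cnt CN a + cnt CZ a) (cnt CN a)) else 0.

Lemma len_filter4 {A} (p : A -> bool) x1 x2 x3 x4 :
  length (filter p [x1; x2; x3; x4]) = (Nat.b2n (p x1) + Nat.b2n (p x2) + Nat.b2n (p x3) + Nat.b2n (p x4))%nat.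
Proof. simpl. destruct (p x1), (p x2), (p x3), (p x4); reflexivity. Qed.

Lemma clf_CN n a : (1 <= n)%nat -> cl_eqb (clf n a) CN = Nat.eqb a n.
Proof.
  intros Hn. unfold clf. destruct (Nat.eqb_spec a 0) as [->|H0].
  - symmetry. apply Nat.eqb_neq. lia.
  - destruct (Nat.eqb_spec a n); reflexivity.
Qed.

Lemma clf_CZ n a : cl_eqb (clf n a) CZ = Nat.eqb a 0.
Proof.
  unfold clf. destruct (Nat.eqb_spec a 0) as [->|H0]. reflexivity.
  destruct (Nat.eqb a n); reflexivity.
Qed.

Lemma Zeqb_lin a b S : Z.eqb (4 * Z.of_nat a - S) (4 * Z.of_nat b - S) = Nat.eqb a b.
Proof.
  destruct (Z.eqb_spec (4 * Z.of_nat a - S) (4 * Z.of_nat b - S)), (Nat.eqb_spec a b); auto; lia.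
Qed.

Lemma coef_kmap n a b c d : (1 <= n)%nat -> In (a, b, c, d) (filter minz (Bx n)) ->
  coef n (kmap (a, b, c, d)) = gw (clf n a, clf n b, clf n c, clf n d).
Proof.
  intros Hn. rewrite filter_In. unfold Bx. rewrite in_box4, !in_seq. intros [Hr Hm].
  assert (Hz : a = 0%nat \/ b = 0%nat \/ c = 0%nat \/ d = 0%nat).
  { simpl in Hm. rewrite !Bool.orb_true_iff, !Nat.eqb_eq in Hm. tauto. }
  rewrite kmap_eq. unfold coef, zmax4, zmin4, count_eq, k1, k2, k3, k4. cbv beta iota.
  set (S := Z.of_nat (a + b + c + d)).
  unfold gw, hasZ, cnt. rewrite !clf_CZ. simpl in Hm. rewrite Hm. rewrite !len_filter4.
  rewrite !clf_CN, !clf_CZ by auto.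
  destruct (Z.ltb_spec (Z.max (Z.max (4 * Z.of_nat a - S) (4 * Z.of_nat b - S))
          (Z.max (4 * Z.of_nat c - S) (4 * Z.of_nat d - S)) -
        Z.min (Z.min (4 * Z.of_nat a - S) (4 * Z.of_nat b - S))
          (Z.min (4 * Z.of_nat c - S) (4 * Z.of_nat d - S))) (4 * Z.of_nat n)) as [Hl|Hl].
  - assert (Ha : Nat.eqb a n = false) by (apply Nat.eqb_neq; lia).
    assert (Hb : Nat.eqb b n = false) by (apply Nat.eqb_neq; lia).
    assert (Hc : Nat.eqb c n = false) by (apply Nat.eqb_neq; lia).
    assert (Hd : Nat.eqb d n = false) by (apply Nat.eqb_neq; lia).
    rewrite Ha, Hb, Hc, Hd. reflexivity.
  - assert (HM : (Z.max (Z.max (4 * Z.of_nat a - S) (4 * Z.of_nat b - S))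
          (Z.max (4 * Z.of_nat c - S) (4 * Z.of_nat d - S)) = 4 * Z.of_nat n - S)%Z) by lia.
    assert (Hmn : (Z.min (Z.min (4 * Z.of_nat a - S) (4 * Z.of_nat b - S))
          (Z.min (4 * Z.of_nat c - S) (4 * Z.of_nat d - S)) = 4 * Z.of_nat 0 - S)%Z) by lia.
    rewrite HM, Hmn, !Zeqb_lin.
    assert (Hs : a = n \/ b = n \/ c = n \/ d = n) by lia.
    replace (Nat.eqb (Nat.b2n (Nat.eqb a n) + Nat.b2n (Nat.eqb b n) + Nat.b2n (Nat.eqb c n) + Nat.b2n (Nat.eqb d n)) 0) with false.
    reflexivity.
    symmetry. apply Nat.eqb_neq.
    destruct Hs as [ -> | [ -> | [ -> | -> ]]]; rewrite Nat.eqb_refl; simpl; lia.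
Qed.

Lemma phi_kmap a b c d x : t1 x + t2 x + t3 x + t4 x = 0 ->
  phi (kmap (a, b, c, d)) x =
  Cmult (Cmult (Cmult (ee a (t1 x)) (ee b (t2 x))) (ee c (t3 x))) (ee d (t4 x)).
Proof.
  intros Hs. unfold phi, dotZR. rewrite kmap_eq. unfold k1, k2, k3, k4. cbv beta iota.
  change (cos ?u, sin ?u) with (E u).
  rewrite !minus_IZR, !mult_IZR, <- !INR_IZR_INZ, !plus_INR.
  unfold ee. rewrite <- !E_add. f_equal.
  replace (t4 x) with (- (t1 x + t2 x + t3 x)) by lra. field.
Qed.

Lemma fact_mul_le p q : (fact p * fact q <= fact (p + q))%nat.
Proof.
  induction p; simpl. lia.
  pose proof (lt_O_fact q). nia.
Qed.

Lemma gw_bound a : Rabs (gw a) <= 1.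
Proof.
  unfold gw. destruct (hasZ a). 2:{ rewrite Rabs_R0; lra. }
  destruct (Nat.eqb (cnt CN a) 0). rewrite Rabs_R1; lra.
  set (p := cnt CN a). set (q := cnt CZ a).
  unfold binomR. replace (p + q - p)%nat with q by lia.
  pose proof (fact_mul_le p q). apply le_INR in H. rewrite mult_INR in H.
  pose proof (lt_O_fact p). pose proof (lt_O_fact q).
  apply lt_INR in H0. apply lt_INR in H1. simpl in H0, H1.
  assert (1 <= INR (fact (p + q)) / (INR (fact p) * INR (fact q))).
  { apply Rmult_le_reg_r with (INR (fact p) * INR (fact q)). nra.
    unfold Rdiv. rewrite Rmult_assoc, Rinv_l by nra. lra. }
  rewrite Rabs_pos_eq. apply Rle_trans with (/1). apply Rinv_le_contravar; lra. rewrite Rinv_1; lra.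
  left. apply Rinv_0_lt_compat. lra.
Qed.

Lemma Phi_bound n x : (1 <= n)%nat -> t1 x + t2 x + t3 x + t4 x = 0 ->
  Cmod (Phi_star n x) <= / (4 * INR n ^ 3) * (81 * Qf n (t1 x) (t2 x) (t3 x) (t4 x)).
Proof.
  intros Hn Hs. unfold Phi_star. rewrite Cmod_mult, Cmod_R.
  assert (Hpos : 0 < / (4 * INR n ^ 3)).
  { apply Rinv_0_lt_compat. apply lt_INR in Hn. simpl in Hn. pose proof (pow_lt (INR n) 3). nra. }
  rewrite Rabs_pos_eq by lra. apply Rmult_le_compat_l. lra.
  rewrite <- (Csum_perm _ _ _ (Hn_perm n)). rewrite Csum_map.
    rewrite Csum_filter.
    erewrite Csum_ext.
    2:{ intros [[[a b] c] d] Hm.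
        instantiate (1 := fun m => let '(m1, m2, m3, m4) := m in
             Cmult (RtoC (gw (clf n m1, clf n m2, clf n m3, clf n m4)))
               (Cmult (Cmult (Cmult (ee m1 (t1 x)) (ee m2 (t2 x))) (ee m3 (t3 x))) (ee m4 (t4 x)))).
        cbv beta iota. destruct (minz (a, b, c, d)) eqn:Em.
        - rewrite coef_kmap, phi_kmap; auto. apply filter_In; auto.
        - unfold gw. replace (hasZ (clf n a, clf n b, clf n c, clf n d)) with false.
          ring. unfold hasZ. rewrite !clf_CZ. simpl in Em. rewrite Em. reflexivity. }
    unfold Bx. rewrite box_expand. apply expand_bound; auto.
    intros a Ha. unfold gw. rewrite Ha. reflexivity.
    apply gw_bound.
Qed.

Lemma sin_lb_eq x : sin_lb x = x - x^3/6 + x^5/120 - x^7/5040.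
Proof.
  unfold sin_lb, sin_approx, sin_term. cbn [sum_f_R0].
  replace (INR (fact (2 * 0 + 1))) with 1 by (rewrite INR_IZR_INZ; reflexivity).
  replace (INR (fact (2 * 1 + 1))) with 6 by (rewrite INR_IZR_INZ; reflexivity).
  replace (INR (fact (2 * 2 + 1))) with 120 by (rewrite INR_IZR_INZ; reflexivity).
  replace (INR (fact (2 * 3 + 1))) with 5040 by (rewrite INR_IZR_INZ; reflexivity).
  simpl. field.
Qed.

Lemma jordan x : 0 <= x <= 2 -> x / 3 <= sin x.
Proof.
  intros H. pose proof PI2_3_2. destruct (SIN x) as [H1 _]; try lra.
  rewrite sin_lb_eq in H1.
  assert (H2 : x * x <= 4) by nra.
  assert (H3: x^3 <= 4 * x) by (simpl; nra).
  assert (H5 : 0 <= x^5) by (apply pow_le; lra).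
  assert (H4 : x^7 <= 42 * x^5) by (replace (x^7) with (x^5 * (x*x)) by ring; nra).
  lra.
Qed.

Lemma sin_abs_ge z : Rabs z <= 1/2 -> Rabs z <= Rabs (sin (PI * z)).
Proof.
  intros H. pose proof PI2_3_2. pose proof PI_4.
  destruct (Rle_dec 0 z) as [Hz|Hz].
  - pose proof (jordan (PI * z)) as J. rewrite Rabs_pos_eq in H by lra.
    rewrite Rabs_pos_eq by lra. assert (PI * z <= 2) by nra. rewrite Rabs_pos_eq. nra.
    assert (0 <= PI * z / 3) by nra. lra.
  - pose proof (jordan (PI * (- z))) as J. rewrite Rabs_left in H by lra.
    rewrite Rabs_left by lra.
    replace (PI * z) with (- (PI * - z)) by ring. rewrite sin_neg, Rabs_Ropp.
    assert (PI * - z <= 2) by nra. rewrite Rabs_pos_eq. nra.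
    assert (0 <= PI * - z / 3) by nra. lra.
Qed.

Lemma abs_sin_plus_PI u : Rabs (sin (u + PI)) = Rabs (sin u).
Proof. rewrite neg_sin, Rabs_Ropp. reflexivity. Qed.

Lemma abs_sin_shift y c : (c = -2 \/ c = -1 \/ c = 0 \/ c = 1 \/ c = 2) ->
  Rabs (sin (PI * y)) = Rabs (sin (PI * (y - c))).
Proof.
  intros [ -> | [ -> | [ -> | [ -> | -> ]]]].
  - replace (PI * (y - -2)) with (PI * y + PI + PI) by ring. rewrite !abs_sin_plus_PI. reflexivity.
  - replace (PI * (y - -1)) with (PI * y + PI) by ring. rewrite !abs_sin_plus_PI. reflexivity.
  - replace (y - 0) with y by ring. reflexivity.
  - replace (PI * y) with (PI * (y - 1) + PI) by ring. rewrite !abs_sin_plus_PI. reflexivity.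
  - replace (PI * y) with (PI * (y - 2) + PI + PI) by ring. rewrite !abs_sin_plus_PI. reflexivity.
Qed.

Lemma inv_le_of M X : 0 < M -> 1 <= X * M -> / M <= X.
Proof.
  intros HM H. apply Rmult_le_reg_r with M; auto. rewrite Rinv_l by lra. lra.
Qed.

Lemma Kf_le_one n y c : (1 <= n)%nat -> Rabs (y - c) <= 1/2 ->
  Rabs (sin (PI * y)) = Rabs (sin (PI * (y - c))) ->
  Kf n y <= 8 * INR n / (1 + Rabs (4 * INR n * y - 4 * INR n * c)).
Proof.
  intros Hn He Hs. apply le_INR in Hn. simpl in Hn.
  pose proof (sin_abs_ge _ He) as Hsg. rewrite <- Hs in Hsg.
  set (e := Rabs (y - c)) in *. set (s := Rabs (sin (PI * y))) in *.
  set (d := Rabs (4 * INR n * y - 4 * INR n * c)).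
  assert (Hd : d = 4 * INR n * e).
  { unfold d, e. replace (4 * INR n * y - 4 * INR n * c) with ((4 * INR n) * (y - c)) by ring.
    rewrite Rabs_mult, (Rabs_pos_eq (4 * INR n)) by lra. reflexivity. }
  assert (He0 : 0 <= e) by apply Rabs_pos.
  unfold Kf. fold s. set (M := Rmax s (/ (INR n + 1))).
  assert (HM1 : s <= M) by apply Rmax_l. assert (HM2 : / (INR n + 1) <= M) by apply Rmax_r.
  assert (Hinv : 0 < / (INR n + 1)) by (apply Rinv_0_lt_compat; lra).
  assert (HnM : 1 <= (INR n + 1) * M).
  { apply Rmult_le_reg_l with (/ (INR n + 1)); auto. rewrite <- Rmult_assoc, Rinv_l by lra. lra. }
  assert (Hd0 : 0 <= d) by (rewrite Hd; nra).
  apply inv_le_of. lra.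
  replace (8 * INR n / (1 + d) * M) with (8 * INR n * M / (1 + d)) by (field; lra).
  assert (H1 : 1 + d <= 8 * INR n * M).
  { destruct (Rle_dec d 1). nra. nra. }
  unfold Rdiv. apply Rmult_le_reg_r with (1 + d). lra.
  rewrite Rmult_assoc, Rinv_l by lra. lra.
Qed.

Definition cs5 : list R := [-2; -1; 0; 1; 2].

Lemma Kf_le5 n y : (1 <= n)%nat -> Rabs y <= 2 ->
  Kf n y <= rsum cs5 (fun c => 8 * INR n / (1 + Rabs (4 * INR n * y - 4 * INR n * c))).
Proof.
  intros Hn Hy.
  assert (Hpos : forall c, 0 <= 8 * INR n / (1 + Rabs (4 * INR n * y - 4 * INR n * c))).
  { intros c. apply le_INR in Hn. simpl in Hn. pose proof (Rabs_pos (4 * INR n * y - 4 * INR n * c)).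
    apply Rle_mult_inv_pos; lra. }
  unfold cs5, rsum; simpl.
  pose proof (Hpos (-2)). pose proof (Hpos (-1)). pose proof (Hpos 0). pose proof (Hpos 1). pose proof (Hpos 2).
  assert (Hy' : -2 <= y <= 2) by (unfold Rabs in Hy; destruct (Rcase_abs y); lra). clear Hy.
  destruct (Rle_dec y (-3/2)).
  { pose proof (Kf_le_one n y (-2) Hn ltac:(apply Rabs_le; lra) ltac:(apply abs_sin_shift; lra)). lra. }
  destruct (Rle_dec y (-1/2)).
  { pose proof (Kf_le_one n y (-1) Hn ltac:(apply Rabs_le; lra) ltac:(apply abs_sin_shift; lra)). lra. }
  destruct (Rle_dec y (1/2)).
  { pose proof (Kf_le_one n y 0 Hn ltac:(apply Rabs_le; lra) ltac:(apply abs_sin_shift; lra)). lra. }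
  destruct (Rle_dec y (3/2)).
  { pose proof (Kf_le_one n y 1 Hn ltac:(apply Rabs_le; lra) ltac:(apply abs_sin_shift; lra)). lra. }
  { pose proof (Kf_le_one n y 2 Hn ltac:(apply Rabs_le; lra) ltac:(apply abs_sin_shift; lra)). lra. }
Qed.

Definition Gf (u : R) : R := if Rle_dec 0 u then ln (1 + u) else - ln (1 - u).

Lemma ln_ge_1m y : 0 < y -> 1 - / y <= ln y.
Proof.
  intros Hy. pose proof (exp_ineq1_le (ln (/ y))). rewrite exp_ln in H by (apply Rinv_0_lt_compat; lra).
  rewrite ln_Rinv in H by lra. lra.
Qed.

Lemma ln_ratio_bound a : 0 < a -> / (a + 1) <= ln (a + 1) - ln a.
Proof.
  intros Ha. rewrite <- ln_div by lra. pose proof (ln_ge_1m ((a + 1) / a)).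
  assert (0 < (a + 1) / a) by (apply Rdiv_lt_0_compat; lra).
  replace (/ ((a + 1) / a)) with (a / (a + 1)) in H by (field; lra).
  replace (/ (a + 1)) with (1 - a / (a + 1)) by (field; lra). lra.
Qed.

Lemma harm_step u : / (1 + Rabs u) <= 3 * (Gf (u + 1/2) - Gf (u - 1/2)).
Proof.
  unfold Gf. pose proof ln_lt_2.
  destruct (Rle_dec (1/2) u) as [H1|H1].
  - rewrite Rabs_pos_eq by lra.
    destruct (Rle_dec 0 (u + 1/2)); [|lra]. destruct (Rle_dec 0 (u - 1/2)); [|lra].
    pose proof (ln_ratio_bound (1 + (u - 1/2)) ltac:(lra)).
    replace (1 + (u - 1/2) + 1) with (1 + (u + 1/2)) in H0 by lra.
    assert (/ (1 + u) <= 3 * / (1 + (u + 1/2))).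
    { apply Rmult_le_reg_r with ((1 + u) * (1 + (u + 1/2))). nra.
      field_simplify; try lra. }
    lra.
  - destruct (Rle_dec (-1/2) u) as [H2|H2].
    + destruct (Rle_dec 0 (u + 1/2)); [|lra]. destruct (Rle_dec 0 (u - 1/2)); [lra|].
      assert (ln 2 <= ln (1 + (u + 1/2)) + ln (1 - (u - 1/2))).
      { rewrite <- ln_mult by lra. apply ln_le. lra. nra. }
      assert (/ (1 + Rabs u) <= 1).
      { pose proof (Rabs_pos u). apply Rle_trans with (/1). apply Rinv_le_contravar; lra. rewrite Rinv_1; lra. }
      lra.
    + rewrite Rabs_left by lra.
      destruct (Rle_dec 0 (u + 1/2)); [lra|]. destruct (Rle_dec 0 (u - 1/2)); [lra|].
      pose proof (ln_ratio_bound (1 - (u + 1/2)) ltac:(lra)).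
      replace (1 - (u + 1/2) + 1) with (1 - (u - 1/2)) in H0 by lra.
      assert (/ (1 + - u) <= 3 * / (1 - (u - 1/2))).
      { apply Rmult_le_reg_r with ((1 + - u) * (1 - (u - 1/2))). nra.
        field_simplify; try lra. }
      lra.
Qed.

Lemma Gf_le u : Gf u <= ln (1 + Rabs u) /\ - Gf u <= ln (1 + Rabs u).
Proof.
  unfold Gf. destruct (Rle_dec 0 u).
  - rewrite Rabs_pos_eq by lra. assert (0 <= ln (1 + u)).
    { rewrite <- ln_1. apply ln_le; lra. } lra.
  - rewrite Rabs_left by lra. assert (0 <= ln (1 - u)).
    { rewrite <- ln_1. apply ln_le; lra. } replace (1 + - u) with (1 - u) by lra. lra.
Qed.

Lemma tele (H : nat -> R) s L : rsum (seq s L) (fun i => H (S i) - H i) = H (s + L)%nat - H s.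
Proof.
  revert s; induction L; intros s; simpl. rewrite Nat.add_0_r; ring.
  rewrite IHL. replace (S s + L)%nat with (s + S L)%nat by lia. ring.
Qed.

Lemma harm_sum n w : (1 <= n)%nat -> Rabs w <= 12 * INR n ->
  rsum (zrange n) (fun k => / (1 + Rabs (IZR k - w))) <= 6 * ln (18 * INR n).
Proof.
  intros Hn Hw. apply le_INR in Hn. simpl in Hn.
  unfold zrange. rewrite rsum_map.
  set (H := fun i : nat => Gf (INR i - 4 * INR n - w - 1/2)).
  apply Rle_trans with (rsum (seq 0 (8 * n + 1)) (fun i => 3 * (H (S i) - H i))).
  { apply rsum_le. intros i _.
    replace (IZR (Z.of_nat i - 4 * Z.of_nat n)) with (INR i - 4 * INR n)
      by (rewrite minus_IZR, mult_IZR, <- !INR_IZR_INZ; reflexivity).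
    unfold H. rewrite S_INR.
    replace (INR i + 1 - 4 * INR n - w - 1/2) with ((INR i - 4 * INR n - w) + 1/2) by lra.
    replace (INR i - 4 * INR n - w - 1/2) with ((INR i - 4 * INR n - w) - 1/2) by lra.
    apply harm_step. }
  rewrite rsum_scal_l, tele. unfold H.
  replace (INR (0 + (8 * n + 1))) with (8 * INR n + 1) by (rewrite Nat.add_0_l, plus_INR, mult_INR; simpl; ring).
  replace (INR 0) with 0 by reflexivity.
  destruct (Gf_le (8 * INR n + 1 - 4 * INR n - w - 1/2)) as [A _].
  destruct (Gf_le (0 - 4 * INR n - w - 1/2)) as [_ B].
  assert (ln (1 + Rabs (8 * INR n + 1 - 4 * INR n - w - 1/2)) <= ln (18 * INR n)).
  { apply ln_le. pose proof (Rabs_pos (8 * INR n + 1 - 4 * INR n - w - 1/2)); lra.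
    unfold Rabs in *; destruct (Rcase_abs w), (Rcase_abs (8 * INR n + 1 - 4 * INR n - w - 1/2)); lra. }
  assert (ln (1 + Rabs (0 - 4 * INR n - w - 1/2)) <= ln (18 * INR n)).
  { apply ln_le. pose proof (Rabs_pos (0 - 4 * INR n - w - 1/2)); lra.
    unfold Rabs in *; destruct (Rcase_abs w), (Rcase_abs (0 - 4 * INR n - w - 1/2)); lra. }
  lra.
Qed.

Lemma rsum_plus {A} (l : list A) f g : rsum l (fun x => f x + g x) = rsum l f + rsum l g.
Proof. induction l; simpl. ring. rewrite IHl; ring. Qed.

Lemma rsum_swap {A B} (l1 : list A) (l2 : list B) (F : A -> B -> R) :
  rsum l1 (fun a => rsum l2 (fun b => F a b)) = rsum l2 (fun b => rsum l1 (fun a => F a b)).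
Proof.
  induction l1.
  - simpl. induction l2; simpl; auto. rewrite <- IHl2. ring.
  - change (rsum (a :: l1) (fun a0 => rsum l2 (fun b => F a0 b))) with
      (rsum l2 (fun b => F a b) + rsum l1 (fun a0 => rsum l2 (fun b => F a0 b))).
    rewrite IHl1, <- rsum_plus. apply rsum_ext. intros; reflexivity.
Qed.

Lemma node1d n tt : (1 <= n)%nat -> Rabs tt <= 1 ->
  rsum (zrange n) (fun k => Kf n (tt - IZR k * / (4 * INR n))) <= 240 * INR n * ln (18 * INR n).
Proof.
  intros Hn Ht. pose proof Hn as Hn'. apply le_INR in Hn'. simpl in Hn'.
  apply Rle_trans with (rsum (zrange n) (fun k => rsum cs5 (fun c =>
      8 * INR n * / (1 + Rabs (IZR k - 4 * INR n * (tt - c)))))).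
  { apply rsum_le. intros k Hk. apply in_zrange in Hk.
    assert (Hk' : - (4 * INR n) <= IZR k <= 4 * INR n).
    { replace (4 * INR n) with (IZR (4 * Z.of_nat n)) by (rewrite mult_IZR, <- INR_IZR_INZ; reflexivity).
      split; [rewrite <- opp_IZR|]; apply IZR_le; lia. }
    eapply Rle_trans. apply Kf_le5; auto.
    { assert (Rabs (IZR k * / (4 * INR n)) <= 1).
      { rewrite Rabs_mult, (Rabs_pos_eq (/ _)) by (left; apply Rinv_0_lt_compat; lra).
        apply Rmult_le_reg_r with (4 * INR n). lra.
        rewrite Rmult_assoc, Rinv_l, Rmult_1_r by lra.
        unfold Rabs; destruct (Rcase_abs (IZR k)); lra. }
      unfold Rabs in *. destruct (Rcase_abs tt), (Rcase_abs (IZR k * / (4 * INR n))),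
        (Rcase_abs (tt - IZR k * / (4 * INR n))); lra. }
    apply Req_le. apply rsum_ext. intros c _. unfold Rdiv. f_equal. f_equal. f_equal.
    rewrite <- Rabs_Ropp. f_equal. field. lra. }
  rewrite rsum_swap.
  replace (240 * INR n * ln (18 * INR n)) with (INR (length cs5) * (8 * INR n * (6 * ln (18 * INR n))))
    by (simpl; ring).
  apply rsum_const_le. intros c Hc.
  rewrite rsum_scal_l. apply Rmult_le_compat_l. lra.
  apply harm_sum; auto.
  assert (-2 <= c <= 2) by (simpl in Hc; lra).
  rewrite Rabs_mult, Rabs_pos_eq by lra.
  assert (Rabs (tt - c) <= 3).
  { unfold Rabs in *; destruct (Rcase_abs tt), (Rcase_abs (tt - c)); lra. }
  nra.
Qed.

Definition box3 {A : Type} (l : list A) : list (A * A * A) :=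
  flat_map (fun a => flat_map (fun b => map (fun c => (a, b, c)) l) l) l.

Lemma in_box3 {A} (l : list A) a b c : In a l -> In b l -> In c l -> In (a, b, c) (box3 l).
Proof.
  intros Ha Hb Hc. unfold box3. apply in_flat_map. exists a; split; auto.
  apply in_flat_map. exists b; split; auto. apply in_map_iff. exists c; auto.
Qed.

Lemma rsum_box3_prod {A} (l : list A) f g h :
  rsum (box3 l) (fun y => let '(a, b, c) := y in f a * g b * h c) = rsum l f * rsum l g * rsum l h.
Proof.
  unfold box3. rewrite rsum_flat_map.
  transitivity (rsum l (fun a => f a * (rsum l g * rsum l h))).
  - apply rsum_ext; intros a _. rewrite rsum_flat_map.
    transitivity (rsum l (fun b => f a * g b * rsum l h)).
    + apply rsum_ext; intros b _. rewrite rsum_map. rewrite <- rsum_scal_l. reflexivity.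
    + rewrite rsum_scal_r, rsum_scal_l. ring.
  - rewrite rsum_scal_r. ring.
Qed.

Definition dec3 : forall x y : Z * Z * Z, {x = y} + {x <> y}.
Proof. decide equality; try apply Z.eq_dec. decide equality; apply Z.eq_dec. Defined.

Lemma proj_bound n (p : Z4 -> Z * Z * Z) (F : Z * Z * Z -> R) :
  (forall j j', In j (Hn_star_list n) -> In j' (Hn_star_list n) -> p j = p j' -> j = j') ->
  (forall j, In j (Hn_star_list n) -> In (p j) (box3 (zrange n))) ->
  (forall y, 0 <= F y) ->
  rsum (Hn_star_list n) (fun j => F (p j)) <= rsum (box3 (zrange n)) F.
Proof.
  intros Hinj Hin HF. rewrite <- rsum_map. apply rsum_incl; auto. exact dec3.
  - apply FinFun.Injective_map_NoDup_in; auto.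
    rewrite Hn_star_list_eq. apply NoDup_filter. apply NoDup_box4. apply NoDup_zrange.
  - intros y Hy. apply in_map_iff in Hy. destruct Hy as [j [<- Hj]]. auto.
Qed.

Lemma L_facts n a b c d : In (a, b, c, d) (Hn_star_list n) ->
  In a (zrange n) /\ In b (zrange n) /\ In c (zrange n) /\ In d (zrange n) /\ (a + b + c + d = 0)%Z.
Proof.
  rewrite Hn_star_list_eq, filter_In, in_box4, in_Hn_starb_iff. tauto.
Qed.

Definition fK n (tt : R) (k : Z) : R := Kf n (tt - IZR k * / (4 * INR n)).

Lemma fK_nonneg n tt k : 0 <= fK n tt k.
Proof. unfold fK. pose proof (Kf_ge_1 n (tt - IZR k * / (4 * INR n))). lra. Qed.

Lemma prod3_bound n (f g h : Z -> R) B :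
  (forall k, 0 <= f k) -> (forall k, 0 <= g k) -> (forall k, 0 <= h k) ->
  rsum (zrange n) f <= B -> rsum (zrange n) g <= B -> rsum (zrange n) h <= B ->
  rsum (box3 (zrange n)) (fun y => let '(a, b, c) := y in f a * g b * h c) <= B ^ 3.
Proof.
  intros Hf Hg Hh H1 H2 H3. rewrite rsum_box3_prod.
  assert (0 <= rsum (zrange n) f) by (apply rsum_nonneg; auto).
  assert (0 <= rsum (zrange n) g) by (apply rsum_nonneg; auto).
  assert (0 <= rsum (zrange n) h) by (apply rsum_nonneg; auto).
  replace (B ^ 3) with (B * B * B) by ring.
  apply Rmult_le_compat; try apply Rmult_le_pos; try lra. apply Rmult_le_compat; lra.
Qed.

Lemma Q_sum_bound n t B : (1 <= n)%nat ->
  rsum (zrange n) (fK n (t1 t)) <= B -> rsum (zrange n) (fK n (t2 t)) <= B ->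
  rsum (zrange n) (fK n (t3 t)) <= B -> rsum (zrange n) (fK n (t4 t)) <= B ->
  rsum (Hn_star_list n) (fun j => let x := vsub t (node n j) in Qf n (t1 x) (t2 x) (t3 x) (t4 x))
  <= 4 * B ^ 3.
Proof.
  intros Hn H1 H2 H3 H4.
  assert (HP : forall j, let x := vsub t (node n j) in Qf n (t1 x) (t2 x) (t3 x) (t4 x) =
    fK n (t2 t) (k2 j) * fK n (t3 t) (k3 j) * fK n (t4 t) (k4 j) +
    fK n (t1 t) (k1 j) * fK n (t3 t) (k3 j) * fK n (t4 t) (k4 j) +
    fK n (t1 t) (k1 j) * fK n (t2 t) (k2 j) * fK n (t4 t) (k4 j) +
    fK n (t1 t) (k1 j) * fK n (t2 t) (k2 j) * fK n (t3 t) (k3 j)) by (intros; reflexivity).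
  rewrite (rsum_ext _ _ _ (fun j _ => HP j)). rewrite !rsum_plus.
  pose proof (fK_nonneg n (t1 t)). pose proof (fK_nonneg n (t2 t)).
  pose proof (fK_nonneg n (t3 t)). pose proof (fK_nonneg n (t4 t)).
  assert (Hinj : forall (p : Z4 -> Z * Z * Z), (forall a b c d a' b' c' d',
     In (a, b, c, d) (Hn_star_list n) -> In (a', b', c', d') (Hn_star_list n) ->
     p (a, b, c, d) = p (a', b', c', d') -> (a, b, c, d) = (a', b', c', d')) ->
     forall j j', In j (Hn_star_list n) -> In j' (Hn_star_list n) -> p j = p j' -> j = j').
  { intros p Hp [[[a b] c] d] [[[a' b'] c'] d']. apply Hp. }
  assert (A1 : rsum (Hn_star_list n) (fun j => fK n (t2 t) (k2 j) * fK n (t3 t) (k3 j) * fK n (t4 t) (k4 j)) <= B ^ 3).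
  { eapply Rle_trans.
    apply (proj_bound n (fun j => (k2 j, k3 j, k4 j))
      (fun y => let '(a, b, c) := y in fK n (t2 t) a * fK n (t3 t) b * fK n (t4 t) c)).
    - apply Hinj. intros a b c d a' b' c' d' Ha Ha' Heq. simpl in Heq. inversion Heq; subst.
      apply L_facts in Ha. apply L_facts in Ha'. f_equal. f_equal. f_equal. lia.
    - intros [[[a b] c] d] Hj. apply L_facts in Hj. simpl. apply in_box3; tauto.
    - intros [[a b] c]. repeat apply Rmult_le_pos; auto.
    - apply prod3_bound; auto. }
  assert (A2 : rsum (Hn_star_list n) (fun j => fK n (t1 t) (k1 j) * fK n (t3 t) (k3 j) * fK n (t4 t) (k4 j)) <= B ^ 3).
  { eapply Rle_trans.
    apply (proj_bound n (fun j => (k1 j, k3 j, k4 j))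
      (fun y => let '(a, b, c) := y in fK n (t1 t) a * fK n (t3 t) b * fK n (t4 t) c)).
    - apply Hinj. intros a b c d a' b' c' d' Ha Ha' Heq. simpl in Heq. inversion Heq; subst.
      apply L_facts in Ha. apply L_facts in Ha'. f_equal. f_equal. f_equal. lia.
    - intros [[[a b] c] d] Hj. apply L_facts in Hj. simpl. apply in_box3; tauto.
    - intros [[a b] c]. repeat apply Rmult_le_pos; auto.
    - apply prod3_bound; auto. }
  assert (A3 : rsum (Hn_star_list n) (fun j => fK n (t1 t) (k1 j) * fK n (t2 t) (k2 j) * fK n (t4 t) (k4 j)) <= B ^ 3).
  { eapply Rle_trans.
    apply (proj_bound n (fun j => (k1 j, k2 j, k4 j))
      (fun y => let '(a, b, c) := y in fK n (t1 t) a * fK n (t2 t) b * fK n (t4 t) c)).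
    - apply Hinj. intros a b c d a' b' c' d' Ha Ha' Heq. simpl in Heq. inversion Heq; subst.
      apply L_facts in Ha. apply L_facts in Ha'. f_equal. f_equal. lia.
    - intros [[[a b] c] d] Hj. apply L_facts in Hj. simpl. apply in_box3; tauto.
    - intros [[a b] c]. repeat apply Rmult_le_pos; auto.
    - apply prod3_bound; auto. }
  assert (A4 : rsum (Hn_star_list n) (fun j => fK n (t1 t) (k1 j) * fK n (t2 t) (k2 j) * fK n (t3 t) (k3 j)) <= B ^ 3).
  { eapply Rle_trans.
    apply (proj_bound n (fun j => (k1 j, k2 j, k3 j))
      (fun y => let '(a, b, c) := y in fK n (t1 t) a * fK n (t2 t) b * fK n (t3 t) c)).
    - apply Hinj. intros a b c d a' b' c' d' Ha Ha' Heq. simpl in Heq. inversion Heq; subst.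
      apply L_facts in Ha. apply L_facts in Ha'. f_equal. lia.
    - intros [[[a b] c] d] Hj. apply L_facts in Hj. simpl. apply in_box3; tauto.
    - intros [[a b] c]. repeat apply Rmult_le_pos; auto.
    - apply prod3_bound; auto. }
  lra.
Qed.

Lemma scaled_bound n z : (1 <= n)%nat -> (- (4 * Z.of_nat n) <= z <= 4 * Z.of_nat n)%Z ->
  -1 <= IZR z * / (4 * INR n) <= 1.
Proof.
  intros Hn Hz. apply le_INR in Hn. simpl in Hn.
  assert (Hb : - (4 * INR n) <= IZR z <= 4 * INR n).
  { replace (4 * INR n) with (IZR (4 * Z.of_nat n)) by (rewrite mult_IZR, <- INR_IZR_INZ; reflexivity).
    split; [rewrite <- opp_IZR|]; apply IZR_le; lia. }
  assert (0 < / (4 * INR n)) by (apply Rinv_0_lt_compat; lra).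
  split.
  - apply Rmult_le_reg_r with (4 * INR n). lra.
    rewrite Rmult_assoc, Rinv_l by lra. lra.
  - apply Rmult_le_reg_r with (4 * INR n). lra.
    rewrite Rmult_assoc, Rinv_l by lra. lra.
Qed.

Lemma node_in n j : (1 <= n)%nat -> In j (Hn_star_list n) -> in_Omega_bar (node n j).
Proof.
  intros Hn. destruct j as [[[a b] c] d].
  rewrite Hn_star_list_eq, filter_In, in_Hn_starb_iff. intros [_ H].
  destruct H as [Hs [_ [_ [_ [H12 [H13 [H14 [H23 [H24 H34]]]]]]]]].
  unfold in_Omega_bar, node, t1, t2, t3, t4, k1, k2, k3, k4. cbv beta iota zeta.
  set (s := / (4 * INR n)).
  assert (E : forall u v : Z, IZR u * s - IZR v * s = IZR (u - v) * s) by (intros; rewrite minus_IZR; ring).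
  rewrite !E.
  pose proof (scaled_bound n _ Hn H12). pose proof (scaled_bound n _ Hn H13).
  pose proof (scaled_bound n _ Hn H14). pose proof (scaled_bound n _ Hn H23).
  pose proof (scaled_bound n _ Hn H24). pose proof (scaled_bound n _ Hn H34).
  unfold s. repeat split; try lra.
  replace (IZR a * / (4 * INR n) + IZR b * / (4 * INR n) + IZR c * / (4 * INR n) + IZR d * / (4 * INR n))
    with (IZR (a + b + c + d) * / (4 * INR n)) by (rewrite !plus_IZR; ring).
  rewrite Hs. ring.
Qed.

Lemma vsub_sum n t j : in_Omega_bar t -> In j (Hn_star_list n) ->
  let x := vsub t (node n j) in t1 x + t2 x + t3 x + t4 x = 0.
Proof.
  intros [Ht _]. destruct j as [[[a b] c] d].
  rewrite Hn_star_list_eq, filter_In, in_Hn_starb_iff. intros [_ [Hs _]].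
  cbv zeta.
  change (t1 (vsub t (node n (a, b, c, d)))) with (t1 t - IZR a * / (4 * INR n)).
  change (t2 (vsub t (node n (a, b, c, d)))) with (t2 t - IZR b * / (4 * INR n)).
  change (t3 (vsub t (node n (a, b, c, d)))) with (t3 t - IZR c * / (4 * INR n)).
  change (t4 (vsub t (node n (a, b, c, d)))) with (t4 t - IZR d * / (4 * INR n)).
  replace (t1 t - IZR a * / (4 * INR n) + (t2 t - IZR b * / (4 * INR n)) + (t3 t - IZR c * / (4 * INR n)) +
    (t4 t - IZR d * / (4 * INR n))) with ((t1 t + t2 t + t3 t + t4 t) - IZR (a + b + c + d) * / (4 * INR n))
    by (rewrite !plus_IZR; ring).
  rewrite Hs, Ht. ring.
Qed.

Lemma ln_18n n : (2 <= n)%nat -> 0 <= ln (18 * INR n) <= 35 * ln (INR n).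
Proof.
  intros Hn. apply le_INR in Hn. simpl in Hn.
  pose proof ln_lt_2.
  assert (ln 2 <= ln (INR n)) by (apply ln_le; lra).
  assert (ln 18 <= 17).
  { pose proof (exp_ineq1_le (ln 18)). rewrite exp_ln in H1 by lra. lra. }
  split.
  - rewrite <- ln_1. apply ln_le; lra.
  - rewrite ln_mult by lra. lra.
Qed.

Theorem theorem3p19 :
  exists c : R, forall n : nat, (2 <= n)%nat ->
    forall f : V4 -> C, continuous_on_Omega_bar f ->
    forall M : R, (forall s, in_Omega_bar s -> Cmod (f s) <= M) ->
    forall t, in_Omega_bar t ->
      Cmod (In_star n f t) <= c * (ln (INR n)) ^ 3 * M.
Proof.
  exists (81 * 240 ^ 3 * 35 ^ 3).
  intros n Hn2 f _ M HM t Ht.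
  assert (Hn : (1 <= n)%nat) by lia.
  pose proof Hn as HnR. apply le_INR in HnR. simpl in HnR.
  assert (HM0 : 0 <= M) by (pose proof (HM t Ht); pose proof (Cmod_ge_0 (f t)); lra).
  assert (Htb : Rabs (t1 t) <= 1 /\ Rabs (t2 t) <= 1 /\ Rabs (t3 t) <= 1 /\ Rabs (t4 t) <= 1).
  { destruct Ht as [Hs [H12 [H13 [H14 [H23 [H24 H34]]]]]].
    repeat split; apply Rabs_le; lra. }
  destruct Htb as [Hb1 [Hb2 [Hb3 Hb4]]].
  set (B := 240 * INR n * ln (18 * INR n)).
  assert (HQ := Q_sum_bound n t B Hn (node1d n (t1 t) Hn Hb1) (node1d n (t2 t) Hn Hb2)
                  (node1d n (t3 t) Hn Hb3) (node1d n (t4 t) Hn Hb4)).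
  assert (Hinv : 0 < / (4 * INR n ^ 3)).
  { apply Rinv_0_lt_compat. pose proof (pow_lt (INR n) 3). nra. }
  apply Rle_trans with (rsum (Hn_star_list n) (fun j =>
     M * (/ (4 * INR n ^ 3) * (81 * (let x := vsub t (node n j) in Qf n (t1 x) (t2 x) (t3 x) (t4 x)))))).
  { unfold In_star. eapply Rle_trans. apply Cmod_Csum_le. apply rsum_le. intros j Hj.
    rewrite Cmod_mult. apply Rmult_le_compat. apply Cmod_ge_0. apply Cmod_ge_0.
    apply HM. apply node_in; auto.
    apply Phi_bound; auto. apply (vsub_sum n t j Ht Hj). }
  rewrite rsum_scal_l, rsum_scal_l, rsum_scal_l.
  apply Rle_trans with (M * (/ (4 * INR n ^ 3) * (81 * (4 * B ^ 3)))).
  { apply Rmult_le_compat_l; auto. apply Rmult_le_compat_l; [lra|]. lra. }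
  destruct (ln_18n n Hn2) as [L0 L1].
  replace (M * (/ (4 * INR n ^ 3) * (81 * (4 * B ^ 3)))) with (81 * 240 ^ 3 * M * ln (18 * INR n) ^ 3)
    by (unfold B; field; lra).
  assert (ln (18 * INR n) ^ 3 <= (35 * ln (INR n)) ^ 3) by (apply pow_incr; lra).
  replace ((35 * ln (INR n)) ^ 3) with (35 ^ 3 * ln (INR n) ^ 3) in H by ring.
  assert (0 <= 81 * 240 ^ 3 * M) by (apply Rmult_le_pos; [lra|auto]).
  replace (81 * 240 ^ 3 * 35 ^ 3 * ln (INR n) ^ 3 * M) with ((81 * 240 ^ 3 * M) * (35 ^ 3 * ln (INR n) ^ 3)) by ring.
  apply Rmult_le_compat_l; auto.
Qed.
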